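(* Let $\mathrm{SU}(2,1)$ denote the group of complex $3\times 3$ matrices of determinant $1$ preserving the Hermitian form $\langle z,w\rangle = z_1\overline{w_3}+z_2\overline{w_2}+z_3\overline{w_1}$ on $\mathbb{C}^3$. Let $\Gamma\subset \mathrm{SU}(2,1)$ be a subgroup, and let $\mathrm{Tr}(\Gamma)=\mathbb{Q}(\mathrm{Tr}(g) : g\in\Gamma)$. Suppose that $\Gamma$ contains a parabolic element and that $\Gamma$ is Zariski dense in $\mathrm{SU}(2,1)$. Then $\Gamma$ can be conjugated (within $\mathrm{SU}(2,1)$) to a subgroup of $\mathrm{SU}(2,1,\mathrm{Tr}(\Gamma))$, i.e. there exists $h\in\mathrm{SU}(2,1)$ such that every entry of every matrix in $h\Gamma h^{-1}$ lies in $\mathrm{Tr}(\Gamma)$.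
   Context: Complex hyperbolic plane $\mathbb{H}^2_{\mathbb{C}}$ is the image in $\mathbb{C}P^2$ of the vectors $z$ with $\langle z,z\rangle<0$, and its boundary $\partial\mathbb{H}^2_{\mathbb{C}}$ is the image of the nonzero vectors with $\langle z,z\rangle=0$; $\mathrm{SU}(2,1)$ acts on $\mathbb{H}^2_{\mathbb{C}}\cup\partial\mathbb{H}^2_{\mathbb{C}}$ projectively. An element of $\mathrm{SU}(2,1)$ is parabolic if its action fixes exactly one point of $\partial\mathbb{H}^2_{\mathbb{C}}$ and no point of $\mathbb{H}^2_{\mathbb{C}}$. For a field $K\subset\mathbb{C}$, $\mathrm{SU}(2,1,K)$ denotes the set of matrices in $\mathrm{SU}(2,1)$ with all entries in $K$. *)

(* Defs.v *)
From HB Require Import structures.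
From mathcomp Require Import all_boot all_order all_algebra.
From mathcomp Require Import reals.
From mathcomp Require Import complex.
From mathcomp Require Import mpoly.
Set Implicit Arguments. Unset Strict Implicit. Unset Printing Implicit Defensive.
Import Order.TTheory GRing.Theory Num.Theory.
Local Open Scope ring_scope.

Section SU21.
Variable R : realType.
Local Notation C := R[i].

Definition herm (z w : 'cV[C]_3) : C :=
  z 0 0 * (w 2%:R 0)^* + z 1 0 * (w 1 0)^* + z 2%:R 0 * (w 0 0)^*.

Definition SU21 (A : 'M[C]_3) : Prop :=
  \det A = 1 /\ forall z w : 'cV[C]_3, herm (A *m z) (A *m w) = herm z w.

Definition proj_fixed (A : 'M[C]_3) (z : 'cV[C]_3) : Prop :=
  z != 0 /\ exists lam : C, A *m z = lam *: z.

(* Points of the boundary: nonzero null vectors; points of the complex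
   hyperbolic plane: negative vectors. *)
Definition boundary_vec (z : 'cV[C]_3) : Prop := z != 0 /\ herm z z = 0.
Definition negative_vec (z : 'cV[C]_3) : Prop := herm z z < 0.

(* Parabolic: fixes exactly one point of the boundary and no point of H^2_C. *)
Definition parabolic (A : 'M[C]_3) : Prop :=
  SU21 A /\
  (exists z, boundary_vec z /\ proj_fixed A z /\
     forall w, boundary_vec w -> proj_fixed A w -> exists c : C, w = c *: z) /\
  (forall z, negative_vec z -> ~ proj_fixed A z).

Definition subgroup_SU21 (G : 'M[C]_3 -> Prop) : Prop :=
  (forall g, G g -> SU21 g) /\ G 1%:M /\
  (forall g h, G g -> G h -> G (g *m h)) /\
  (forall g, G g -> G (invmx g)).

Definition subfield (K : C -> Prop) : Prop :=
  K 0 /\ K 1 /\ (forall x y, K x -> K y -> K (x + y)) /\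
  (forall x, K x -> K (- x)) /\ (forall x y, K x -> K y -> K (x * y)) /\
  (forall x, K x -> x != 0 -> K x^-1).

Definition trace_field (G : 'M[C]_3 -> Prop) (x : C) : Prop :=
  forall K, subfield K -> (forall g, G g -> K (\tr g)) -> K x.

(* Real Zariski topology on SU(2,1) (a real algebraic group): polynomial
   functions are complex polynomials in the 9 entries and their 9 complex
   conjugates (equivalently, real polynomials in real/imaginary parts). *)
Definition coords (A : 'M[C]_3) (k : 'I_18) : C :=
  let m := (k %% 9)%N in
  let e := A (inord (m %/ 3)) (inord (m %% 3)) in
  if (k < 9)%N then e else e^*.

Definition zariski_dense_SU21 (G : 'M[C]_3 -> Prop) : Prop :=
  forall p : {mpoly C[18]},
    (forall g, G g -> p.@[coords g] = 0) ->
    forall A, SU21 A -> p.@[coords A] = 0.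

End SU21.

(* Main.v *)
Require Import Defs.
From HB Require Import structures.
From mathcomp Require Import all_boot all_order all_algebra.
From mathcomp Require Import reals complex mpoly.
From mathcomp Require Import ring.
From Stdlib Require Import Classical.
Import Order.TTheory GRing.Theory Num.Theory.
Local Open Scope ring_scope.
Set Implicit Arguments. Unset Strict Implicit. Unset Printing Implicit Defensive.


Section Work.
Variable R : realType.
Local Notation C := R[i].
Implicit Types (z w y u v x : 'cV[C]_3) (a b c : C).

Definition o0 : 'I_3 := @Ordinal 3 0 isT.
Definition o1 : 'I_3 := @Ordinal 3 1 isT.
Definition o2 : 'I_3 := @Ordinal 3 2 isT.

Lemma ord3P (P : 'I_3 -> Prop) : P o0 -> P o1 -> P o2 -> forall i, P i.
Proof.
move=> H0 H1 H2 [[|[|[|//]]] Hi].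
- by have -> : Ordinal Hi = o0 by apply: val_inj.
- by have -> : Ordinal Hi = o1 by apply: val_inj.
- by have -> : Ordinal Hi = o2 by apply: val_inj.
Qed.

Lemma sum3 (V : nmodType) (F : 'I_3 -> V) : \sum_(i < 3) F i = F o0 + F o1 + F o2.
Proof.
rewrite !big_ord_recr big_ord0 /= add0r.
by congr (F _ + F _ + F _); apply: val_inj.
Qed.

Lemma sum1 (F : 'I_1 -> C) : \sum_(i < 1) F i = F 0.
Proof. by rewrite big_ord_recr big_ord0 /= add0r; congr F; apply: val_inj. Qed.

Lemma ord1E (i : 'I_1) : i = 0.
Proof. by apply: val_inj; case: i => [[|]]. Qed.

Lemma I3_0 : (0 : 'I_3) = o0. Proof. exact: val_inj. Qed.
Lemma I3_1 : (1 : 'I_3) = o1. Proof. exact: val_inj. Qed.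
Lemma I3_2 : (2%:R : 'I_3) = o2. Proof. exact: val_inj. Qed.

Lemma cD a b : (a + b)^* = a^* + b^*. Proof. exact: rmorphD. Qed.
Lemma cM a b : (a * b)^* = a^* * b^*. Proof. exact: rmorphM. Qed.
Lemma cN a : (- a)^* = - a^*. Proof. exact: rmorphN. Qed.
Lemma cB a b : (a - b)^* = a^* - b^*. Proof. exact: rmorphB. Qed.
Lemma cV a : (a^-1)^* = (a^*)^-1. Proof. exact: fmorphV. Qed.
Lemma cK a : a^*^* = a. Proof. exact: conjCK. Qed.
Lemma c1 : (1 : C)^* = 1. Proof. exact: rmorph1. Qed.
Lemma c0 : (0 : C)^* = 0. Proof. exact: rmorph0. Qed.
Lemma cX a n : (a ^+ n)^* = a^* ^+ n. Proof. exact: rmorphXn. Qed.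
Lemma cn n : (n%:R : C)^* = n%:R. Proof. exact: rmorph_nat. Qed.
Lemma cdiv a b : (a / b)^* = a^* / b^*. Proof. by rewrite cM cV. Qed.

Definition ct {m n} (A : 'M[C]_(m,n)) : 'M[C]_(n,m) := (map_mx Num.conj A)^T.
Lemma ctM m n p (A : 'M[C]_(m,n)) (B : 'M[C]_(n,p)) : ct (A *m B) = ct B *m ct A.
Proof. by rewrite /ct map_mxM trmx_mul. Qed.
Lemma ctE m n (A : 'M[C]_(m,n)) i j : ct A i j = (A j i)^*.
Proof. by rewrite /ct !mxE. Qed.

Definition J : 'M[C]_3 := \matrix_(i, j) (if ((i : nat) + j == 2)%N then 1 else 0).

Lemma hermE (z w : 'cV[C]_3) :
  herm z w = z o0 0 * (w o2 0)^* + z o1 0 * (w o1 0)^* + z o2 0 * (w o0 0)^*.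
Proof.
rewrite /herm.
congr (z _ _ * (w _ _)^* + z _ _ * (w _ _)^* + z _ _ * (w _ _)^*); exact: val_inj.
Qed.

Lemma hermM (z w : 'cV[C]_3) : herm z w = (ct w *m J *m z) 0 0.
Proof.
rewrite hermE !mxE sum3 !mxE !sum3 !mxE /=.
ring.
Qed.

Lemma herm_sym z w : herm w z = (herm z w)^*.
Proof. rewrite !hermE !cD !cM !cK. ring. Qed.

Lemma hermDl (z1 z2 w : 'cV[C]_3) : herm (z1 + z2) w = herm z1 w + herm z2 w.
Proof. rewrite !hermE !mxE. ring. Qed.
Lemma hermZl a z w : herm (a *: z) w = a * herm z w.
Proof. rewrite !hermE !mxE. ring. Qed.
Lemma hermDr (z w1 w2 : 'cV[C]_3) : herm z (w1 + w2) = herm z w1 + herm z w2.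
Proof. rewrite !hermE !mxE !cD. ring. Qed.
Lemma hermZr a z w : herm z (a *: w) = a^* * herm z w.
Proof. rewrite !hermE !mxE !cM. ring. Qed.
Lemma herm0l w : herm 0 w = 0.
Proof. rewrite !hermE !mxE. ring. Qed.
Lemma herm0r w : herm w 0 = 0.
Proof. rewrite !hermE !mxE c0. ring. Qed.


Local Notation ev i := (delta_mx i 0 : 'cV[C]_3).

Lemma invmx_left (A B : 'M[C]_3) : B *m A = 1%:M -> invmx A = B.
Proof.
move=> H; have [uB uA] := mulmx1_unit H.
by rewrite -[invmx A]mul1mx -H -mulmxA mulmxV // mulmx1.
Qed.

Lemma JJ : J *m J = 1%:M.
Proof.
apply/matrixP; apply: ord3P; apply: ord3P;
  by rewrite !mxE sum3 !mxE /=; ring.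
Qed.

Lemma ctJ : ct J = J.
Proof.
apply/matrixP; apply: ord3P; apply: ord3P; by rewrite ctE !mxE /= ?c0 ?c1.
Qed.

Lemma ctK m n (A : 'M[C]_(m,n)) : ct (ct A) = A.
Proof. by apply/matrixP => i j; rewrite !ctE cK. Qed.

Lemma ctZ m n a (A : 'M[C]_(m,n)) : ct (a *: A) = a^* *: ct A.
Proof. by apply/matrixP => i j; rewrite /ct !mxE cM. Qed.

Lemma ct_delta (i : 'I_3) : ct (ev i) = delta_mx 0 i.
Proof.
apply/matrixP => k l; rewrite ctE !mxE (ord1E k) andbC.
by case: (l == i); rewrite /= ?c1 ?c0.
Qed.

Lemma entry_delta (M : 'M[C]_3) i j :
  (ct (ev i) *m M *m ev j) 0 0 = M i j.
Proof. by rewrite ct_delta -rowE -colE !mxE. Qed.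

Lemma gram (S : 'M[C]_3) s z w :
  ct S *m J *m S = s *: J -> herm (S *m z) (S *m w) = s * herm z w.
Proof.
move=> H; rewrite !hermM ctM.
have -> : ct w *m ct S *m J *m (S *m z) = ct w *m (ct S *m J *m S) *m z.
  by rewrite !mulmxA.
by rewrite H -scalemxAr -scalemxAl mxE.
Qed.

Lemma gram_herm (S : 'M[C]_3) s :
  (forall z w, herm (S *m z) (S *m w) = s * herm z w) -> ct S *m J *m S = s *: J.
Proof.
move=> H; apply/matrixP => i j.
rewrite -entry_delta.
have -> : ct (ev i) *m (ct S *m J *m S) *m ev j =
  ct (S *m ev i) *m J *m (S *m ev j) by rewrite ctM !mulmxA.
by rewrite -hermM H hermM (entry_delta J i j) !mxE.
Qed.

Lemma SU21E (A : 'M[C]_3) : SU21 A <-> \det A = 1 /\ ct A *m J *m A = J.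
Proof.
split=> [[d H]|[d H]]; split=> //.
  have := @gram_herm A 1; rewrite scale1r; apply=> z w; by rewrite H mul1r.
by move=> z w; rewrite (gram z w (_ : _ = 1 *: J)) ?mul1r ?scale1r.
Qed.

Lemma gram_inv (S : 'M[C]_3) s : s != 0 ->
  ct S *m J *m S = s *: J -> invmx S = s^-1 *: (J *m ct S *m J).
Proof.
move=> s0 H; apply: invmx_left.
rewrite -scalemxAl.
have -> : J *m ct S *m J *m S = J *m (ct S *m J *m S) by rewrite !mulmxA.
by rewrite H scalemxAr scalerA mulVf // scale1r JJ.
Qed.

Lemma gram_unit (S : 'M[C]_3) s : s != 0 ->
  ct S *m J *m S = s *: J -> S \in unitmx.
Proof.
move=> s0 H.
have: (s^-1 *: (J *m ct S *m J)) *m S = 1%:M.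
  rewrite -scalemxAl.
  have -> : J *m ct S *m J *m S = J *m (ct S *m J *m S) by rewrite !mulmxA.
  by rewrite H scalemxAr scalerA mulVf // scale1r JJ.
by case/mulmx1_unit.
Qed.

Definition r3 (i : 'I_3) : 'I_3 := if i == o0 then o2 else if i == o1 then o1 else o0.

Lemma herm_delta z (l : 'I_3) : herm z (ev l) = z (r3 l) 0.
Proof.
move: l; apply: ord3P; rewrite hermE !mxE /= ?c0 ?c1; ring.
Qed.

Lemma coordS (S : 'M[C]_3) s y (i : 'I_3) : s != 0 ->
  ct S *m J *m S = s *: J ->
  (invmx S *m y) i 0 = herm y (S *m ev (r3 i)) / s.
Proof.
move=> s0 H.
have uS := gram_unit s0 H.
have Ey : y = S *m (invmx S *m y) by rewrite mulmxA mulmxV ?mul1mx.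
rewrite {2}Ey (gram _ _ H) herm_delta (mulrC s) mulfK //.
by congr (_ _ _); move: i; apply: ord3P.
Qed.


Definition mk3 (a b c : 'cV[C]_3) : 'M[C]_3 :=
  \matrix_(i, j) nth 0 [:: a i 0; b i 0; c i 0] j.

Lemma mk3_mul (p q r : 'cV[C]_3) z :
  mk3 p q r *m z = z o0 0 *: p + z o1 0 *: q + z o2 0 *: r.
Proof.
apply/matrixP => i j; rewrite (ord1E j) !mxE sum3 !mxE /=; ring.
Qed.

Lemma mk3_e0 (p q r : 'cV[C]_3) : mk3 p q r *m ev o0 = p.
Proof. by rewrite mk3_mul !mxE /= scale1r !scale0r !addr0. Qed.
Lemma mk3_e1 (p q r : 'cV[C]_3) : mk3 p q r *m ev o1 = q.
Proof. by rewrite mk3_mul !mxE /= scale1r !scale0r add0r addr0. Qed.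
Lemma mk3_e2 (p q r : 'cV[C]_3) : mk3 p q r *m ev o2 = r.
Proof. by rewrite mk3_mul !mxE /= scale1r !scale0r !add0r. Qed.

Lemma mk3_gram (p q r : 'cV[C]_3) s :
  herm p p = 0 -> herm q p = 0 -> herm r p = s -> herm q q = s ->
  herm r q = 0 -> herm r r = 0 -> s^* = s ->
  ct (mk3 p q r) *m J *m mk3 p q r = s *: J.
Proof.
move=> pp qp rp qq rq rr ss; apply: gram_herm => z w.
rewrite !mk3_mul !hermDl !hermZl !hermDr !hermZr.
rewrite (herm_sym q p) (herm_sym r p) (herm_sym r q) pp qp rp qq rq rr ss c0.
rewrite !hermE; ring.
Qed.

Definition cross (u w : 'cV[C]_3) : 'cV[C]_3 :=
  \matrix_(i, j) nth 0 [:: (u o1 0)^* * (w o0 0)^* - (u o0 0)^* * (w o1 0)^*;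
                          (u o0 0)^* * (w o2 0)^* - (u o2 0)^* * (w o0 0)^*;
                          (u o2 0)^* * (w o1 0)^* - (u o1 0)^* * (w o2 0)^*] i.

Lemma cross_u u w : herm (cross u w) u = 0.
Proof. rewrite hermE !mxE /=; ring. Qed.
Lemma cross_w u w : herm (cross u w) w = 0.
Proof. rewrite hermE !mxE /=; ring. Qed.
Lemma cross_cc u w :
  herm (cross u w) (cross u w) = herm w u * herm u w - herm u u * herm w w.
Proof. rewrite !hermE !mxE /= !cB !cM !cK; ring. Qed.


Lemma witt u w : herm u u = 0 -> herm w w = 0 -> herm w u = 1 ->
  ct (mk3 u (cross u w) w) *m J *m mk3 u (cross u w) w = 1 *: J.
Proof.
move=> uu ww wu; apply: mk3_gram => //.
- exact: cross_u.
- by rewrite cross_cc uu ww (herm_sym w u) wu c1; ring.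
- by rewrite herm_sym cross_w c0.
- exact: c1.
Qed.

Lemma vec0P u : (forall i, u i 0 = 0) -> u = 0.
Proof. move=> H; apply/matrixP => i j; by rewrite (ord1E j) H mxE. Qed.

Lemma null_partner u : u != 0 -> herm u u = 0 ->
  exists w, herm w w = 0 /\ herm w u = 1.
Proof.
move=> u0 uu.
set x := J *m u.
set r := herm x u.
have rE : r = u o0 0 * (u o0 0)^* + u o1 0 * (u o1 0)^* + u o2 0 * (u o2 0)^*.
  rewrite /r /x hermE !mxE !sum3 !mxE /=; ring.
have rr : r^* = r by rewrite rE !cD !cM !cK; ring.
have r0 : r != 0.
{ apply: contra u0 => r0; apply/eqP; apply: vec0P; apply: ord3P.
  all: move: r0; rewrite rE.
  all: rewrite !paddr_eq0 ?addr_ge0 ?mul_conjC_ge0 // !mul_conjC_eq0.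
  all: by case/andP => /andP[/eqP ? /eqP ?] /eqP ?. }
set hxx := herm x x.
have hxxr : hxx^* = hxx by rewrite /hxx -herm_sym.
set t := - hxx / (2 * r).
have tc : t^* = t by rewrite /t cdiv cN cM cn hxxr rr.
have ux : herm u x = r by rewrite herm_sym rr.
exists (r^-1 *: (x + t *: u)); split.
  rewrite !(hermZl, hermZr, hermDl, hermDr) uu ux -/r -/hxx tc /t.
  field; apply/andP; split => //; change (r^* != 0); by rewrite rr.
rewrite !(hermZl, hermZr, hermDl, hermDr) uu -/r.
by rewrite mulr0 addr0 mulVf.
Qed.


Lemma tr_ct (A : 'M[C]_3) : \tr (ct A) = (\tr A)^*.
Proof. rewrite /mxtrace rmorph_sum; apply: eq_bigr => i _; by rewrite ctE. Qed.

Lemma SU21_inv (g : 'M[C]_3) : SU21 g -> invmx g = J *m ct g *m J.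
Proof.
case/SU21E => _ H.
by rewrite (@gram_inv g 1) ?oner_eq0 ?scale1r // invr1 scale1r.
Qed.

Lemma SU21_tr_inv (g : 'M[C]_3) : SU21 g -> \tr (invmx g) = (\tr g)^*.
Proof.
move=> Hg; rewrite SU21_inv // mxtrace_mulC mulmxA JJ mul1mx.
by rewrite tr_ct.
Qed.

Section TF.
Variable G : 'M[C]_3 -> Prop.
Hypothesis HG : subgroup_SU21 G.
Local Notation k := (trace_field G).

Lemma k0 : k 0. Proof. by move=> K [? _] _. Qed.
Lemma k1 : k 1. Proof. by move=> K [_ [? _]] _. Qed.
Lemma kD a b : k a -> k b -> k (a + b).
Proof. by move=> ha hb K HK Ht; case: (HK) => _ [_ [D _]]; apply: D; [apply: ha | apply: hb]. Qed.
Lemma kN a : k a -> k (- a).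
Proof. by move=> ha K HK Ht; case: (HK) => _ [_ [_ [N _]]]; apply: N; apply: ha. Qed.
Lemma kM a b : k a -> k b -> k (a * b).
Proof. by move=> ha hb K HK Ht; case: (HK) => _ [_ [_ [_ [M _]]]]; apply: M; [apply: ha | apply: hb]. Qed.
Lemma kV a : k a -> k (a^-1).
Proof.
have [->|a0] := eqVneq a 0; first by rewrite invr0.
by move=> ha K HK Ht; case: (HK) => _ [_ [_ [_ [_ V]]]]; apply: V => //; apply: ha.
Qed.
Lemma kB a b : k a -> k b -> k (a - b).
Proof. by move=> ha hb; apply: kD => //; apply: kN. Qed.
Lemma kdiv a b : k a -> k b -> k (a / b).
Proof. by move=> ha hb; apply: kM => //; apply: kV. Qed.
Lemma kn n : k n%:R.
Proof. elim: n => [|n IH]; first exact: k0. by rewrite mulrSr; apply: kD => //; apply: k1. Qed.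
Lemma ktr g : G g -> k (\tr g).
Proof. by move=> Hg K HK Ht; apply: Ht. Qed.

Lemma kc a : k a -> k a^*.
Proof.
move=> ha.
have H1 : subfield (fun x : C => k x^*).
  split; first by rewrite c0; exact: k0.
  split; first by rewrite c1; exact: k1.
  split; first by move=> x y hx hy; rewrite cD; apply: kD.
  split; first by move=> x hx; rewrite cN; apply: kN.
  split; first by move=> x y hx hy; rewrite cM; apply: kM.
  by move=> x hx _; rewrite cV; apply: kV.
have H2 : forall g, G g -> k (\tr g)^*.
  move=> g Hg; case: HG => HSU [_ [_ Hinv]].
  by rewrite -(SU21_tr_inv (HSU g Hg)); apply: ktr; apply: Hinv.
exact: (ha _ H1 H2).
Qed.

End TF.


Definition idx (i j : 'I_3) : 'I_18 := inord (3 * i + j).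

Lemma coords_idx (A : 'M[C]_3) (i j : 'I_3) : coords A (idx i j) = A i j.
Proof.
move: i j; apply: ord3P; apply: ord3P;
  rewrite /coords /idx inordK //=; congr (A _ _); apply: val_inj; by rewrite /= inordK.
Qed.

Lemma dens (G : 'M[C]_3 -> Prop) (f : 'I_3 -> 'I_3 -> C) :
  zariski_dense_SU21 G ->
  (exists A, SU21 A /\ \sum_i \sum_j f i j * A i j != 0) ->
  exists g, G g /\ \sum_i \sum_j f i j * g i j != 0.
Proof.
move=> HZ [A [HA HA0]].
set p : {mpoly C[18]} := \sum_(i < 3) \sum_(j < 3) f i j *: 'X_(idx i j).
have pE : forall B, p.@[coords B] = \sum_i \sum_j f i j * B i j.
  by move=> B; rewrite /p !sum3 !mevalD !mevalZ !mevalXU !coords_idx.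
apply: NNPP => Hn.
have H0 : forall g, G g -> p.@[coords g] = 0.
  move=> g Hg; rewrite pE; apply/eqP; apply: contraT => Hne.
  by exfalso; apply: Hn; exists g.
by move: HA0; rewrite -pE (HZ p H0 A HA) eqxx.
Qed.


Lemma herm_sum (A : 'M[C]_3) y z :
  herm (A *m y) z = \sum_i \sum_j ((z (r3 i) 0)^* * y j 0) * A i j.
Proof. rewrite hermE !mxE !sum3 /=; ring. Qed.

Lemma densH (G : 'M[C]_3 -> Prop) y z :
  zariski_dense_SU21 G ->
  (exists A, SU21 A /\ herm (A *m y) z != 0) ->
  exists g, G g /\ herm (g *m y) z != 0.
Proof.
move=> HZ [A [HA H0]].
have [|g [Hg Hg0]] := @dens G (fun i j => (z (r3 i) 0)^* * y j 0) HZ.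
  by exists A; split => //; rewrite -herm_sum.
by exists g; rewrite herm_sum.
Qed.

Definition vec3 (a b c : C) : 'cV[C]_3 := \matrix_(i, j) nth 0 [:: a; b; c] i.

Lemma vec3E0 a b c : vec3 a b c o0 0 = a. Proof. by rewrite mxE. Qed.
Lemma vec3E1 a b c : vec3 a b c o1 0 = b. Proof. by rewrite mxE. Qed.
Lemma vec3E2 a b c : vec3 a b c o2 0 = c. Proof. by rewrite mxE. Qed.

Lemma mul_vec3 (B : 'M[C]_3) a b c i :
  (B *m vec3 a b c) i 0 = B i o0 * a + B i o1 * b + B i o2 * c.
Proof. by rewrite !mxE sum3 !mxE. Qed.

Lemma prod3 (F : 'I_3 -> C) : \prod_(i < 3) F i = F o0 * F o1 * F o2.
Proof.
rewrite !big_ord_recr big_ord0 /= mul1r.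
by congr (F _ * F _ * F _); apply: val_inj.
Qed.

Lemma det_utrig3 (B : 'M[C]_3) : B o1 o0 = 0 -> B o2 o0 = 0 -> B o2 o1 = 0 ->
  \det B = B o0 o0 * B o1 o1 * B o2 o2.
Proof.
move=> h10 h20 h21; rewrite -det_tr det_trig ?prod3 ?mxE //.
apply/is_trig_mxP; apply: ord3P; apply: ord3P => //= _; by rewrite mxE.
Qed.

Lemma gram_eq (B : 'M[C]_3) s : ct B *m J *m B = s *: J -> forall i j,
  (B o0 i)^* * B o2 j + (B o1 i)^* * B o1 j + (B o2 i)^* * B o0 j = s * J i j.
Proof.
move=> /matrixP H i j; move: (H i j); rewrite !mxE !sum3 !mxE /= => <-.
by rewrite !sum3 !mxE /=; ring.
Qed.

Lemma entry_ev (M : 'M[C]_3) i j : M i j = (M *m ev j) i 0.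
Proof. by rewrite -colE mxE. Qed.

Definition E02 : 'M[C]_3 := delta_mx o0 o2.

Lemma tr_E02 (M : 'M[C]_3) c : \tr (M *m (c *: E02)) = c * M o2 o0.
Proof. rewrite /mxtrace sum3 !mxE !sum3 !mxE /=; ring. Qed.

End Work.


Ltac nzs := repeat (apply/andP; split); first [ done | assumption |
  match goal with H : is_true (_ != 0) |- _ => exact H end ].
Ltac fld := field; try nzs.

Section Work2.
Variable R : realType.
Local Notation C := R[i].
Implicit Types (z w y u v x : 'cV[C]_3) (a b c : C).
Local Notation ev i := (delta_mx i 0 : 'cV[C]_3).
Local Notation J := (@J R).
Local Notation E02 := (@E02 R).

Lemma parab_key (P : 'M[C]_3) u lam :
  SU21 P -> u != 0 -> herm u u = 0 -> P *m u = lam *: u ->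
  (forall w, boundary_vec w -> proj_fixed P w -> exists c : C, w = c *: u) ->
  (forall z, negative_vec z -> ~ proj_fixed P z) ->
  lam * lam^* = 1 /\ \tr P = 2%:R * lam + lam^* ^+ 2 /\
  exists c, c != 0 /\
   ((forall h, \tr (h *m (P *m P - (lam + lam^* ^+ 2) *: P + (lam * lam^* ^+ 2)%:M))
        = c * herm (h *m u) u)
    \/ (forall h, \tr (h *m (P - lam%:M)) = c * herm (h *m u) u)).
Proof.
move=> HP u0 uu Pu Huniq Hneg.
have [w [ww wu]] := null_partner u0 uu.
set T := mk3 u (cross u w) w.
have gT : ct T *m J *m T = 1 *: J := witt uu ww wu.
have uT : T \in unitmx := gram_unit (oner_neq0 _) gT.
set Ti := invmx T.
have TTi : T *m Ti = 1%:M := mulmxV uT.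
have TiT : Ti *m T = 1%:M := mulVmx uT.
have Te0 : T *m ev o0 = u by rewrite mk3_e0.
have Tiu : Ti *m u = ev o0 by rewrite -Te0 mulmxA TiT mul1mx.
have hT : forall z w, herm (T *m z) (T *m w) = herm z w.
  by move=> z1 w1; rewrite (gram _ _ gT) mul1r.
have hTi : forall z w, herm (Ti *m z) (Ti *m w) = herm z w.
  by move=> z1 w1; rewrite -hT !mulmxA TTi !mul1mx.
set B := Ti *m P *m T.
have TB : T *m B = P *m T by rewrite /B !mulmxA TTi mul1mx.
have [detP HPh] := HP.
have hB : forall z w, herm (B *m z) (B *m w) = herm z w.
  by move=> z1 w1; rewrite /B -!mulmxA hTi HPh hT.
have gB : ct B *m J *m B = 1 *: J.
  by apply: gram_herm => z1 w1; rewrite hB mul1r.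
have Be0 : B *m ev o0 = lam *: ev o0.
  by rewrite /B -!mulmxA Te0 Pu -scalemxAr Tiu.
have detB : \det B = 1.
  by rewrite /B !det_mulmx detP mulr1 -det_mulmx TiT det1.
have transfer : forall v mu, B *m v = mu *: v -> P *m (T *m v) = mu *: (T *m v).
  by move=> v mu Hv; rewrite mulmxA -TB -mulmxA Hv scalemxAr.
have Tinj : forall v, T *m v = 0 -> v = 0.
  by move=> v Hv; rewrite -[v]mul1mx -TiT -mulmxA Hv mulmx0.
have uniq' : forall v mu, v != 0 -> herm v v = 0 -> B *m v = mu *: v ->
    exists c, v = c *: ev o0.
  move=> v mu v0 vv Bv.
  have Tv0 : T *m v != 0 by apply: contra v0 => /eqP /Tinj ->.
  have [c Hc] := Huniq (T *m v) (conj Tv0 (etrans (hT v v) vv))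
                  (conj Tv0 (ex_intro _ mu (transfer v mu Bv))).
  exists c; by rewrite -[v]mul1mx -TiT -mulmxA Hc -scalemxAr Tiu.
have neg' : forall v mu, herm v v < 0 -> B *m v = mu *: v -> False.
  move=> v mu vv Bv.
  have v0 : v != 0 by apply: contraTneq vv => ->; rewrite herm0l ltxx.
  have Tv0 : T *m v != 0 by apply: contra v0 => /eqP /Tinj ->.
  apply: (Hneg (T *m v)); first by rewrite /negative_vec hT.
  by split => //; exists mu; apply: transfer.
have trPB : \tr P = \tr B by rewrite /B mxtrace_mulC mulmxA TTi mul1mx.
have fD : forall X Y : 'M[C]_3, Ti *m (X + Y) *m T = Ti *m X *m T + Ti *m Y *m T.
  by move=> X Y; rewrite mulmxDr mulmxDl.
have fN : forall X : 'M[C]_3, Ti *m (- X) *m T = - (Ti *m X *m T).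
  by move=> X; rewrite mulmxN mulNmx.
have fZ : forall a (X : 'M[C]_3), Ti *m (a *: X) *m T = a *: (Ti *m X *m T).
  by move=> a X; rewrite -scalemxAr -scalemxAl.
have fM : forall X Y : 'M[C]_3, Ti *m (X *m Y) *m T = (Ti *m X *m T) *m (Ti *m Y *m T).
  by move=> X Y; rewrite -!mulmxA (mulmxA T) TTi mul1mx.
have fS : forall b, Ti *m b%:M *m T = b%:M.
  by move=> b; rewrite mul_mx_scalar -scalemxAl TiT scalemx1.
have conj_poly : forall a b, Ti *m (P *m P - a *: P + b%:M) *m T = B *m B - a *: B + b%:M.
  by move=> a b; rewrite fD fD fN fZ fM fS.
have conj_lin : forall b, Ti *m (P - b%:M) *m T = B - b%:M.
  by move=> b; rewrite fD fN fS.
have trQ : forall Q c, Ti *m Q *m T = c *: E02 -> forall h, \tr (h *m Q) = c * herm (h *m u) u.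
  move=> Q c HQ h.
  have -> : Q = T *m (c *: E02) *m Ti by rewrite -HQ !mulmxA TTi mul1mx -mulmxA TTi mulmx1.
  rewrite mulmxA mxtrace_mulC mulmxA mulmxA tr_E02.
  rewrite entry_ev -!mulmxA Te0 (@coordS _ T 1 _ o2 (oner_neq0 _) gT) divr1.
  by congr (_ * herm _ _); rewrite mk3_e0.
clearbody B.
have b00 : B o0 o0 = lam by rewrite entry_ev Be0 !mxE /= mulr1.
have b10 : B o1 o0 = 0 by rewrite entry_ev Be0 !mxE /= mulr0.
have b20 : B o2 o0 = 0 by rewrite entry_ev Be0 !mxE /= mulr0.
have e02 := gram_eq gB o0 o2.
have e01 := gram_eq gB o0 o1.
have e12 := gram_eq gB o1 o2.
rewrite !mxE /= ?b00 ?b10 ?b20 ?c0 in e02 e01 e12.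
rewrite !mul0r !addr0 !mul1r in e02 e01.
rewrite mul1r in e12.
have lam0 : lam != 0.
  by apply/eqP => l0; move: e02; rewrite l0 c0 mul0r => /eqP; rewrite eq_sym oner_eq0.
have lamc0 : lam^* != 0 by rewrite conjC_eq0.
have b21 : B o2 o1 = 0.
  by move/eqP: e01; rewrite mulf_eq0 (negbTE lamc0) => /eqP.
rewrite b21 c0 mul0r addr0 in e12.
have b22 : B o2 o2 = (lam^*)^-1 by apply: (mulfI lamc0); rewrite mulfV // e02.
rewrite det_utrig3 // b00 b22 in detB.
have b11 : B o1 o1 = lam^* / lam.
  transitivity (lam^* / lam * (lam * B o1 o1 * lam^*^-1)); last by rewrite detB mulr1.
  by field; rewrite lam0 lamc0.
have nz : lam * lam^* != 0 by rewrite mulf_neq0.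
have [n1|n1] := eqVneq (lam * lam^*) 1; last first.
  exfalso.
  have h22 : lam - B o2 o2 != 0.
    rewrite b22; apply: contra n1 => /eqP H.
    by apply/eqP; rewrite [X in X * _](subr0_eq H) mulVf.
  have h11 : B o1 o1 - B o2 o2 != 0.
    rewrite b11 b22; apply: contra n1 => /eqP /subr0_eq H.
    have H1 : lam^* ^+ 2 = lam.
      transitivity (lam^* / lam * lam * lam^*); first by field.
      rewrite H; fld.
    have H2 : lam ^+ 2 = lam^*.
      by have := congr1 Num.conj H1; rewrite cX cK => <-.
    have H3 : (lam * lam^*) * (lam * lam^*) = 1 * (lam * lam^*).
      transitivity (lam ^+ 2 * lam^* ^+ 2); first by ring.
      rewrite H1 H2; ring.
    by apply/eqP; apply: (mulIf nz).
  set bb := - B o1 o2 / (B o1 o1 - B o2 o2).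
  set aa := - (B o0 o1 * bb + B o0 o2) / (lam - B o2 o2).
  set v := vec3 aa bb 1.
  have Bv : B *m v = B o2 o2 *: v.
    apply/matrixP; apply: ord3P => j; rewrite (ord1E j) mul_vec3 mxE;
      rewrite ?vec3E0 ?vec3E1 ?vec3E2 ?b00 ?b10 ?b20 ?b21.
    - rewrite /aa; field; by rewrite h22.
    - rewrite /bb; field; by rewrite h11.
    - ring.
  have vv : herm v v = 0.
    have := hB v v; rewrite Bv hermZl hermZr b22 cV cK => Hv.
    have : (1 - lam^-1 * lam^*^-1) * herm v v = 0.
      by rewrite mulrBl mul1r -{1}Hv; ring.
    move/eqP; rewrite mulf_eq0 => /orP [|/eqP //].
    rewrite subr_eq0 => /eqP H'; exfalso; move/eqP: n1; apply.
    transitivity ((lam^-1 * lam^*^-1)^-1); last by rewrite -H' invr1.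
    by rewrite invfM !invrK mulrC.
  have v0 : v != 0.
    by apply/eqP => /matrixP /(_ o2 0); rewrite vec3E2 mxE /= => /eqP; rewrite oner_eq0.
  have [c Hc] := uniq' v _ v0 vv Bv.
  by move/matrixP: Hc => /(_ o2 0); rewrite vec3E2 !mxE /= mulr0 => /eqP; rewrite oner_eq0.
have lamc : lam^* = lam^-1 by apply: (mulfI lam0); rewrite n1 mulfV.
have b22' : B o2 o2 = lam by rewrite b22 lamc invrK.
have mE : lam^* ^+ 2 = lam^-1 ^+ 2 by rewrite lamc.
have b11' : B o1 o1 = lam^* ^+ 2 by rewrite b11 lamc; fld.
rewrite b22' b11' cX cK in e12.
have b12 : B o1 o2 = - (B o0 o1)^* * lam^-1.
  transitivity (((B o0 o1)^* * lam + lam ^+ 2 * B o1 o2 - (B o0 o1)^* * lam) / lam ^+ 2).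
    by fld.
  rewrite e12; fld.
split=> //.
split; first by rewrite trPB /mxtrace sum3 b00 b11' b22'; ring.
rewrite mE.
set m := lam^-1 ^+ 2.
set kap := B o0 o1 * B o1 o2 + B o0 o2 * (lam - m).
have [k0|k0] := eqVneq kap 0; last first.
  exists kap; split => //; left; apply: trQ.
  rewrite conj_poly; apply/matrixP; apply: ord3P; apply: ord3P;
    rewrite /kap /m !mxE ?sum3 ?mxE /= ?mulr1n ?mulr0n ?b00 ?b10 ?b20 ?b21 ?b22' ?b11' ?mE ?b12;
    fld.
rewrite /kap b12 in k0.
have [lm|lm] := eqVneq (lam - m) 0.
  rewrite lm mulr0 addr0 in k0.
  have mlam : m = lam by apply/eqP; rewrite eq_sym -subr_eq0 lm.
  have b01 : B o0 o1 = 0.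
    have : B o0 o1 * (B o0 o1)^* = 0.
      transitivity (- lam * (B o0 o1 * (- (B o0 o1)^* / lam))); first by fld.
      by rewrite k0 mulr0.
    by move/eqP; rewrite mul_conjC_eq0 => /eqP.
  have b12' : B o1 o2 = 0 by rewrite b12 b01 c0; ring.
  have [b02|b02] := eqVneq (B o0 o2) 0.
    exfalso.
    pose v := vec3 (0:C) 0 1.
    have Bv : B *m v = lam *: v.
      apply/matrixP; apply: ord3P => j; rewrite (ord1E j) mul_vec3 mxE /v
        ?vec3E0 ?vec3E1 ?vec3E2 ?b02 ?b12' ?b22'; ring.
    have vv : herm v v = 0 by rewrite hermE /v ?vec3E0 ?vec3E1 ?vec3E2 c0; ring.
    have v0 : v != 0.
      by apply/eqP => /matrixP /(_ o2 0); rewrite vec3E2 mxE /= => /eqP; rewrite oner_eq0.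
    have [c Hc] := uniq' v _ v0 vv Bv.
    by move/matrixP: Hc => /(_ o2 0); rewrite vec3E2 !mxE /= mulr0 => /eqP; rewrite oner_eq0.
  exists (B o0 o2); split => //; right; apply: trQ.
  rewrite conj_lin; apply/matrixP; apply: ord3P; apply: ord3P;
    rewrite !mxE /= ?mulr1n ?mulr0n ?b00 ?b10 ?b20 ?b21 ?b22' ?b11' ?mE ?b12' ?b01 -/m ?mlam; ring.
exfalso.
have b02 : B o0 o2 = B o0 o1 * (B o0 o1)^* / lam / (lam - m).
  transitivity ((B o0 o1 * (- (B o0 o1)^* / lam) + B o0 o2 * (lam - m)
     - B o0 o1 * (- (B o0 o1)^* / lam)) / (lam - m)); first by fld.
  rewrite k0; fld.
pose bb := B o1 o2 / (lam - m).
pose aa := - (1 + bb * bb^*) / 2%:R.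
pose v := vec3 aa bb 1.
have Bv : B *m v = lam *: v.
  apply/matrixP; apply: ord3P => j; rewrite (ord1E j) mul_vec3 mxE /v
    ?vec3E0 ?vec3E1 ?vec3E2 ?b00 ?b10 ?b20 ?b21 ?b22' ?b11' ?mE -/m.
  - rewrite /bb b02 b12; fld.
  - rewrite /bb; fld.
  - ring.
have vv : herm v v < 0.
  have key : forall b : C, herm (vec3 (- (1 + b * b^*) / 2%:R) b 1)
      (vec3 (- (1 + b * b^*) / 2%:R) b 1) = -1.
    move=> b; rewrite hermE !vec3E0 !vec3E1 !vec3E2 c1 !cdiv !cN !cD !cM cK c1.
    by field.
  by rewrite /v /aa key oppr_lt0 ltr01.
exact: (neg' v lam vv Bv).
Qed.

End Work2.


Section Work3.
Variable R : realType.
Local Notation C := R[i].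
Implicit Types (z w y u v x : 'cV[C]_3) (a b c : C).
Local Notation ev i := (delta_mx i 0 : 'cV[C]_3).
Local Notation J := (@J R).

Lemma trB (A B : 'M[C]_3) : \tr (A - B) = \tr A - \tr B.
Proof. by rewrite /mxtrace -sumrB; apply: eq_bigr => i _; rewrite !mxE. Qed.

Definition Mx : 'M[C]_3 :=
  \matrix_(i, j) nth 0 (nth [::] [:: [:: 1; 0; 0]; [:: 1; 1; 0]; [:: - 2%:R^-1; -1; 1]] i) j.

Lemma Mx_SU21 : SU21 Mx.
Proof.
apply/SU21E; split.
  rewrite det_trig ?prod3 ?mxE /=; first by rewrite !mul1r.
  apply/is_trig_mxP; apply: ord3P; apply: ord3P => //= _; by rewrite mxE.
apply/matrixP; apply: ord3P; apply: ord3P;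
  rewrite !mxE !sum3 !mxE !sum3 !mxE /= ?c0 ?c1 ?cN ?cV ?c1 ?cn; by field.
Qed.

Lemma dens_witt (G : 'M[C]_3 -> Prop) u w (j : 'I_3) :
  zariski_dense_SU21 G -> herm u u = 0 -> herm w w = 0 -> herm w u = 1 ->
  exists g, G g /\ herm (g *m u) (mk3 u (cross u w) w *m ev j) != 0.
Proof.
move=> HZ uu ww wu; apply: densH => //.
set T := mk3 u (cross u w) w.
have gT : ct T *m J *m T = 1 *: J := witt uu ww wu.
have uT : T \in unitmx := gram_unit (oner_neq0 _) gT.
have TTi : T *m invmx T = 1%:M := mulmxV uT.
have TiT : invmx T *m T = 1%:M := mulVmx uT.
have hT : forall z w, herm (T *m z) (T *m w) = herm z w.
  by move=> z1 w1; rewrite (gram _ _ gT) mul1r.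
have [dM hM] := Mx_SU21.
exists (T *m Mx *m invmx T); split.
  split.
    by rewrite !det_mulmx dM mulr1 -det_mulmx TTi det1.
  move=> z1 w1.
  rewrite -!mulmxA hT hM.
  by rewrite -hT !mulmxA TTi !mul1mx.
have Te0 : T *m ev o0 = u by rewrite mk3_e0.
have -> : T *m Mx *m invmx T *m u = T *m (Mx *m ev o0).
  by rewrite -Te0 !mulmxA -(mulmxA (T *m Mx)) TiT mulmx1.
rewrite hT herm_delta.
move: j; apply: ord3P; rewrite /= !mxE !sum3 !mxE /= !mulr0 !addr0 !mulr1 ?oner_eq0 //.
by rewrite oppr_eq0 invr_eq0 pnatr_eq0.
all: by rewrite ?oner_eq0 ?oppr_eq0.
Qed.

End Work3.

Notation ev3 i := (delta_mx i (0:'I_1)).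

Unset Implicit Arguments.

Theorem mainTheorem1 (R : realType) (G : 'M[R[i]]_3 -> Prop) :
  subgroup_SU21 G ->
  (exists g, G g /\ parabolic g) ->
  zariski_dense_SU21 G ->
  exists h : 'M[R[i]]_3, SU21 h /\
    forall g, G g -> forall i j : 'I_3,
      trace_field G ((h *m g *m invmx h) i j).
Proof.
move=> HG [P [GP [HP [[u [[u0 uu] [[_ [lam Pu]] Huniq]]] Hneg]]]] HZ.
have [HSU [G1 [GM GI]]] := HG.
have [n1 [trP [c [cnz Hc]]]] := parab_key HP u0 uu Pu Huniq Hneg.
have lam0 : lam != 0 by apply/eqP => l0; move: n1; rewrite l0 mul0r => /eqP; rewrite eq_sym oner_eq0.
have lamc : lam^* = lam^-1 by apply: (mulfI lam0); rewrite n1 mulfV.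
rewrite lamc in trP Hc.
have ktP : trace_field G (\tr P) := ktr GP.
have ktPc : trace_field G (\tr P)^* := kc HG ktP.
have tc : (\tr P)^* = 2%:R * lam^-1 + lam ^+ 2.
  by rewrite trP cD cM cn cX cV lamc invrK.
have klam : trace_field G lam.
  have [lm|lm] := eqVneq (lam - lam^-1 ^+ 2) 0.
    have -> : lam = \tr P / 3%:R.
      rewrite trP; have -> : lam^-1 ^+ 2 = lam by apply/eqP; rewrite eq_sym -subr_eq0 lm.
      by field.
    exact: (kdiv ktP (@kn _ G 3)).
  have Dz : (\tr P) ^+ 2 - 3%:R * (\tr P)^* = (lam - lam^-1 ^+ 2) ^+ 2.
    by rewrite tc trP; fld.
  have D0 : (lam - lam^-1 ^+ 2) ^+ 2 != 0 by rewrite expf_neq0.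
  have l3 : lam * (lam * lam) - 1 != 0.
    have -> : lam * (lam * lam) - 1 = lam ^+ 2 * (lam - lam^-1 ^+ 2) by fld.
    by rewrite mulf_neq0 // expf_neq0.
  have -> : lam = (\tr P * (\tr P)^* - 9%:R) / (2%:R * ((\tr P) ^+ 2 - 3%:R * (\tr P)^*)).
    rewrite Dz tc trP; fld.
  rewrite expr2.
  exact: (kdiv (kB (kM ktP ktPc) (@kn _ G 9)) (kM (@kn _ G 2) (kB (kM ktP ktP) (kM (@kn _ G 3) ktPc)))).
have km : trace_field G (lam^-1 ^+ 2) by rewrite expr2; exact: (kM (kV klam) (kV klam)).
have Hk : forall h, G h -> trace_field G (c * herm (h *m u) u).
  move=> h Gh; case: Hc => Hc; rewrite -Hc.
    rewrite mulmxDr mulmxBr mxtraceD trB -scalemxAr mxtraceZ mul_mx_scalar mxtraceZ mulmxA.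
    exact: (kD (kB (ktr (GM _ _ (GM _ _ Gh GP) GP)) (kM (kD klam km) (ktr (GM _ _ Gh GP))))
             (kM (kM klam km) (ktr Gh))).
  rewrite mulmxBr trB mul_mx_scalar mxtraceZ.
  exact: (kB (ktr (GM _ _ Gh GP)) (kM klam (ktr Gh))).
have [w1 [ww1 wu1]] := null_partner u0 uu.
have [g0 [Gg0 q0]] := @dens_witt _ G u w1 o0 HZ uu ww1 wu1.
rewrite mk3_e0 in q0.
set q := herm (g0 *m u) u in q0.
have Hq : forall h, G h -> trace_field G (herm (h *m u) u / q).
  move=> h Gh.
  have -> : herm (h *m u) u / q = (c * herm (h *m u) u) / (c * q) by fld.
  exact: (kdiv (Hk h Gh) (Hk g0 Gg0)).
have Gunit : forall g, G g -> g \in unitmx.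
  by move=> g Gg; case: (HSU g Gg) => d _; rewrite unitmxE d unitr1.
have Gh : forall g, G g -> forall z w, herm (g *m z) (g *m w) = herm z w.
  by move=> g Gg; case: (HSU g Gg).
pose V y := forall g g', G g -> G g' -> trace_field G (herm (g *m y) (g' *m u) / q).
pose V2 z := forall y, V y -> forall g, G g -> trace_field G (herm (g *m y) z / q).
have Vu : V u.
  move=> g g' Gg Gg'.
  have -> : herm (g *m u) (g' *m u) = herm ((invmx g' *m g) *m u) u.
    by rewrite -(Gh g' Gg' (invmx g' *m g *m u) u) !mulmxA mulmxV ?mul1mx // Gunit.
  exact: Hq _ (GM _ _ (GI _ Gg') Gg).
have VG : forall y h, V y -> G h -> V (h *m y).
  by move=> y h Vy Gh' g g' Gg Gg'; rewrite mulmxA; apply: Vy => //; apply: GM.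
have Vlin : forall y y' a, V y -> V y' -> trace_field G a -> V (a *: y + y').
  move=> y y' a Vy Vy' ka g g' Gg Gg'.
  rewrite mulmxDr -scalemxAr hermDl hermZl mulrDl -mulrA.
  exact: (kD (kM ka (Vy g g' Gg Gg')) (Vy' g g' Gg Gg')).
have V2gu : forall g', G g' -> V2 (g' *m u).
  by move=> g' Gg' y Vy g Gg; apply: Vy.
have V2lin : forall z z' a, V2 z -> V2 z' -> trace_field G a -> V2 (a *: z + z').
  move=> z z' a Vz Vz' ka y Vy g Gg.
  rewrite hermDr hermZr mulrDl -mulrA.
  exact: (kD (kM (kc HG ka) (Vz y Vy g Gg)) (Vz' y Vy g Gg)).
have V2u : V2 u by rewrite -[u]mul1mx; apply: V2gu.
have pair : forall y z, V y -> V2 z -> trace_field G (herm y z / q).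
  by move=> y z Vy Vz; rewrite -[y]mul1mx; apply: Vz.
set x := g0 *m u.
have Vx : V x := VG u g0 Vu Gg0.
have V2x : V2 x := V2gu g0 Gg0.
have xu : herm x u = q by [].
have ux : herm u x = q^* by rewrite herm_sym.
set hxx := herm x x.
have hxxr : hxx^* = hxx by rewrite /hxx -herm_sym.
have qc0 : q^* != 0 by rewrite conjC_eq0.
set t := - hxx / (2%:R * q^*).
have kt : trace_field G t.
  have -> : t = - (hxx / q)^* / 2%:R by rewrite /t cdiv hxxr; fld.
  exact: (kdiv (kN (kc HG (pair x x Vx V2x))) (@kn _ G 2)).
set w3' := t *: u + x.
have Vw3' : V w3' := Vlin u x t Vu Vx kt.
have V2w3' : V2 w3' := V2lin u x t V2u V2x kt.
have w3u : herm w3' u = q by rewrite hermDl hermZl uu mulr0 add0r.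
have uw3 : herm u w3' = q^* by rewrite herm_sym w3u.
have w3w3 : herm w3' w3' = 0.
  rewrite !(hermDl, hermDr, hermZl, hermZr) uu -/hxx ux xu /t cdiv cN cM hxxr cK cn.
  by fld.
clearbody w3'.
set w3n := q^-1 *: w3'.
have w3nu : herm w3n u = 1 by rewrite hermZl w3u mulVf.
have w3nn : herm w3n w3n = 0 by rewrite hermZl hermZr w3w3 !mulr0.
have [g1 [Gg1 y0]] := @dens_witt _ G u w3n o1 HZ uu w3nn w3nu.
rewrite mk3_e1 in y0.
set z2 := cross u w3n in y0.
have uz2 : herm u z2 = 0 by rewrite herm_sym cross_u c0.
have w3z2 : herm w3' z2 = 0.
  have : herm w3n z2 = 0 by rewrite herm_sym cross_w c0.
  by rewrite hermZl => /eqP; rewrite mulf_eq0 invr_eq0 (negbTE q0) /= => /eqP.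
set y := g1 *m u in y0.
have Vy : V y := VG u g1 Vu Gg1.
have V2y : V2 y := V2gu g1 Gg1.
set b := - herm y u / q.
have kb : trace_field G b by rewrite /b mulNr; exact: (kN (pair y u Vy V2u)).
set a := - herm y w3' / q^*.
have ka : trace_field G a.
  have -> : a = - (herm w3' y / q)^* by rewrite /a cdiv -herm_sym mulNr.
  exact: (kN (kc HG (pair w3' y Vw3' V2y))).
set w2 := a *: u + (b *: w3' + y).
have Vw2 : V w2 := Vlin u _ a Vu (Vlin w3' y b Vw3' Vy kb) ka.
have V2w2 : V2 w2 := V2lin u _ a V2u (V2lin w3' y b V2w3' V2y kb) ka.
have w2u : herm w2 u = 0.
  by rewrite !(hermDl, hermZl) uu w3u /b; fld.
have w2w3 : herm w2 w3' = 0.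
  by rewrite !(hermDl, hermZl) uw3 w3w3 /a; fld.
have w2z2 : herm w2 z2 != 0.
  by rewrite !(hermDl, hermZl) uz2 w3z2 !mulr0 !add0r.
have gT2 : ct (mk3 u z2 w3n) *m @J R *m mk3 u z2 w3n = 1 *: @J R := witt uu w3nn w3nu.
set T2 := mk3 u z2 w3n in gT2.
have uT2 : T2 \in unitmx := gram_unit (oner_neq0 _) gT2.
set cc := invmx T2 *m w2.
have w2E : w2 = T2 *m cc by rewrite /cc mulmxA mulmxV ?mul1mx.
have cc2 : cc o2 0 = 0.
  by rewrite /cc (coordS w2 o2 (oner_neq0 _) gT2) /r3 /= mk3_e0 w2u mul0r.
have cc0 : cc o0 0 = 0.
  by rewrite /cc (coordS w2 o0 (oner_neq0 _) gT2) /r3 /= mk3_e2 hermZr w2w3 mulr0 mul0r.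
have cc1 : cc o1 0 = herm w2 z2.
  by rewrite /cc (coordS w2 o1 (oner_neq0 _) gT2) /r3 /= mk3_e1 divr1.
set sig := herm w2 w2.
have sigE : sig = cc o1 0 * (cc o1 0)^*.
  by rewrite /sig {1 2}w2E (gram _ _ gT2) mul1r hermE cc0 cc2 c0; ring.
have sig_gt0 : 0 < sig by rewrite sigE mul_conjC_gt0 cc1.
have sigc : sig^* = sig by rewrite sigE cM cK mulrC.
have sig0 : sig != 0 by rewrite gt_eqF.
have V0 : V 0 by move=> g g' _ _; rewrite mulmx0 herm0l mul0r; exact: (@k0 _ G).
have V20 : V2 0 by move=> y1 _ g _; rewrite herm0r mul0r; exact: (@k0 _ G).
set s1 := sig / q.
have ks1 : trace_field G s1 := pair w2 w2 Vw2 V2w2.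
set w3 := s1 *: w3'.
have Vw3 : V w3 by have := Vlin w3' 0 s1 Vw3' V0 ks1; rewrite addr0.
have V2w3 : V2 w3 by have := V2lin w3' 0 s1 V2w3' V20 ks1; rewrite addr0.
have w3u3 : herm w3 u = sig by rewrite hermZl w3u /s1; fld.
have w3w3' : herm w3 w3 = 0 by rewrite hermZl hermZr w3w3 !mulr0.
have w3w2 : herm w3 w2 = 0 by rewrite hermZl herm_sym w2w3 c0 mulr0.
have gS : ct (mk3 u w2 w3) *m @J R *m mk3 u w2 w3 = sig *: @J R.
  exact: mk3_gram.
clearbody w3.
set S := mk3 u w2 w3 in gS.
have uS : S \in unitmx := gram_unit sig0 gS.
set d := \det S.
have d0 : d != 0 by rewrite -unitfE -unitmxE.
have detJ0 : \det (@J R) != 0.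
  apply/eqP => H; move: (congr1 determinant (@JJ R)); rewrite det_mulmx H mul0r det1.
  by move/eqP; rewrite eq_sym oner_eq0.
have dd : d * d^* = sig ^+ 3.
  have := congr1 determinant gS; rewrite !det_mulmx detZ /ct det_tr det_map_mx -/d.
  move/eqP; rewrite -subr_eq0.
  have -> : d^* * \det (@J R) * d - sig ^+ 3 * \det (@J R) = (d * d^* - sig ^+ 3) * \det (@J R) by ring.
  by rewrite mulf_eq0 (negbTE detJ0) orbF subr_eq0 => /eqP.
set s0 := 3.-root d.
have s03 : s0 ^+ 3 = d by rewrite /s0 rootCK.
have s00 : s0 != 0 by apply: contra d0 => /eqP H; rewrite -s03 H expr0n.
have ss : s0 * s0^* = sig.
  apply/eqP; rewrite -(@eqrXn2 _ 3) ?mul_conjC_ge0 ?ltW //.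
  by rewrite exprMn -cX s03 dd.
have SSi : S *m invmx S = 1%:M := mulmxV uS.
have hSi : forall z w, herm (invmx S *m z) (invmx S *m w) = herm z w / sig.
  move=> za wa; rewrite -{2}[za]mul1mx -{2}[wa]mul1mx -SSi -!mulmxA (gram _ _ gS).
  by fld.
have uSi : invmx S \in unitmx by rewrite unitmx_inv.
have uh : s0 *: invmx S \in unitmx by rewrite unitmxZ ?unitfE.
exists (s0 *: invmx S); split.
  split.
    by rewrite detZ det_inv -/d s03 mulfV.
  move=> za wa; rewrite -!scalemxAl hermZl hermZr hSi mulrA ss; fld.
move=> g Gg i j.
rewrite invmxZ // invmxK.
have -> : s0 *: invmx S *m g *m (s0^-1 *: S) = invmx S *m g *m S.
  by rewrite -!scalemxAl -scalemxAr scalerA mulfV // scale1r.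
have VS : forall j, V (S *m ev3 j).
  by apply: ord3P; rewrite ?mk3_e0 ?mk3_e1 ?mk3_e2.
have V2S : forall j, V2 (S *m ev3 j).
  by apply: ord3P; rewrite ?mk3_e0 ?mk3_e1 ?mk3_e2.
rewrite entry_ev -!mulmxA (coordS _ i sig0 gS).
have -> : herm (g *m (S *m ev3 j)) (S *m ev3 (r3 i)) / sig =
  (herm (g *m (S *m ev3 j)) (S *m ev3 (r3 i)) / q) / s1 by rewrite /s1; fld.
exact: (kdiv (V2S _ _ (VS j) g Gg) ks1).
Qed.
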